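(* Fix integers/reals $d\ge1$, $L\ge1$ and $q>d$. Then $\Phi(\mathcal{H}_L)\le C_{d,q}L^d$ for a finite constant $C_{d,q}$ depending only on $(d,q)$, and consequently $\mathbb{D}_{\mathrm{onl}}(\mathcal{H}_L)\le 4\cdot 2^{q-1}C_{d,q}L^d$.
   Context: $\mathcal{X}=[-1,1]^d$, $\mathcal{Y}=[0,1]$, $\mathcal{H}_L=\{h:\mathcal X\to[0,1]: |h(x)-h(x')|\le L\|x-x'\|_\infty\ \forall x,x'\}$. Loss $\ell_q(y,y')=|y-y'|^q$ ($q\ge1$), which is a $2^{q-1}$-approximate pseudo-metric; the induced metric is $d_\ell(f,g)=\sup_x\ell_q(f(x),g(x))=\|f-g\|_\infty^q$. $N(U,\varepsilon)$ is the minimal size of $S\subseteq\mathcal{H}_L$ with every $u\in U$ within $d_\ell$-distance $\le\varepsilon$ of $S$; $\Phi(U)=\int_0^{\operatorname{diam}(\mathcal{H}_L)}\log_2 N(U,\varepsilon)d\varepsilon$ where $\operatorname{diam}(\mathcal{H}_L)=\sup_{f,g}d_\ell(f,g)$. Online dimension $\mathbb{D}_{\mathrm{onl}}$: for scaled Littlestone trees (internal nodes $u\in\{0,1\}^{<D}$ labeled $x_u\in\mathcal X$, edges labeled $s_{u,0},s_{u,1}\in\mathcal Y$, gap $\gamma_u=\ell_q(s_{u,0},s_{u,1})$) realizable by $\mathcal{H}_L$ (every finite prefix of every branch consistent with some $h\in\mathcal H_L$, i.e. $h(x_{b_{\le t}})=s_{b_{\le t},b_{t+1}}$), $\mathbb{D}_{\mathrm{onl}}(\mathcal{H}_L)=\sup_{\mathcal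 T}\inf_b\sum_t\gamma_{b_{\le t}}$. *)

(* Defs.v *)
From HB Require Import structures.
From mathcomp Require Import all_boot all_order all_algebra.
From mathcomp Require Import all_classical all_reals all_analysis.
Unset Strict Implicit. Unset Printing Implicit Defensive.
Import Order.TTheory GRing.Theory Num.Theory.
Local Open Scope classical_set_scope.
Local Open Scope ring_scope.

Definition pt (R : realType) (d : nat) := 'I_d -> R.

Definition supnorm {R : realType} {d : nat} (x y : pt R d) : R :=
  \big[Num.max/0]_(i < d) `|x i - y i|.

Definition Xdom {R : realType} (d : nat) : set (pt R d) :=
  [set x | forall i, -1 <= x i <= 1].

(* H_L : functions X -> [0,1] that are L-Lipschitz w.r.t. ||.||_oo.
   (Functions are total on R^d; only their values on X matter.) *)
Definition HL {R : realType} (d : nat) (L : R) : set (pt R d -> R) :=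
  [set h | (forall x, Xdom d x -> 0 <= h x <= 1) /\
           (forall x y, Xdom d x -> Xdom d y -> `|h x - h y| <= L * supnorm x y)].

Definition lossq {R : realType} (q : R) (y y' : R) : R := `|y - y'| `^ q.

Definition dl {R : realType} {d : nat} (q : R) (f g : pt R d -> R) : \bar R :=
  ereal_sup [set (lossq q (f x) (g x))%:E | x in Xdom d].

Definition diamH {R : realType} (d : nat) (q L : R) : \bar R :=
  ereal_sup [set dl q f g | f in HL d L & g in HL d L].

(* N(U, eps): minimal size of S subset H_L with every u in U within d_l-distance
   eps of S; S is given as the image of g : 'I_n -> H_L.  (+oo if no finite S.) *)
Definition covnum {R : realType} {d : nat} (q L : R)
    (U : set (pt R d -> R)) (eps : R) : \bar R :=
  ereal_inf [set (n%:R)%:E | n in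
    [set n : nat | exists g : 'I_n -> (pt R d -> R),
       (forall i, HL d L (g i)) /\
       (forall u, U u -> exists i, (dl q u (g i) <= eps%:E)%E)]].

Definition log2e {R : realType} (x : \bar R) : \bar R :=
  match x with
  | r%:E => (ln r / ln 2)%:E
  | +oo%E => +oo%E
  | -oo%E => -oo%E
  end.

Definition Phi {R : realType} (d : nat) (q L : R) (U : set (pt R d -> R)) : \bar R :=
  (\int[lebesgue_measure]_(e in [set e : R | (0 <= e)%R /\ (e%:E <= diamH d q L)%E])
     log2e (covnum q L U e))%E.

(* Scaled Littlestone trees. Nodes are bit strings u : seq bool; depth D is
   Some n (finite) or None (infinite). Node u is internal iff size u < D. *)
Definition internal (D : option nat) (k : nat) : bool :=
  if D is Some n then (k < n)%N else true.

Definition pref (b : nat -> bool) (t : nat) : seq bool := [seq b i | i <- iota 0 t].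

Record SLtree (R : realType) (d : nat) := mkSLtree {
  depth : option nat;
  xlab : seq bool -> pt R d;
  slab : seq bool -> bool -> R
}.
Arguments depth {R d}. Arguments xlab {R d}. Arguments slab {R d}.

Definition well_labeled {R : realType} {d : nat} (T : SLtree R d) : Prop :=
  forall u : seq bool, internal (depth T) (size u) ->
    Xdom d (xlab T u) /\ (forall c, 0 <= slab T u c <= 1).

Definition realizable {R : realType} {d : nat} (L : R) (T : SLtree R d) : Prop :=
  forall (b : nat -> bool) (t : nat),
    (if depth T is Some n then (t <= n)%N else true) ->
    exists h, HL d L h /\
      forall k, (k < t)%N -> h (xlab T (pref b k)) = slab T (pref b k) (b k).

Definition gap {R : realType} {d : nat} (q : R) (T : SLtree R d) (u : seq bool) : R :=
  lossq q (slab T u false) (slab T u true).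

Definition branch_val {R : realType} {d : nat} (q : R) (T : SLtree R d)
    (b : nat -> bool) : \bar R :=
  (\sum_(0 <= t <oo)
     (if internal (depth T) t then (gap q T (pref b t))%:E else 0%E))%E.

Definition Donl {R : realType} (d : nat) (q L : R) : \bar R :=
  ereal_sup [set ereal_inf [set branch_val q T b | b in [set: nat -> bool]]
            | T in [set T : SLtree R d | well_labeled T /\ realizable L T]].

(* Main.v *)
Require Import Defs.
From HB Require Import structures.
From mathcomp Require Import all_boot all_order all_algebra.
From mathcomp Require Import all_classical all_reals all_analysis.
From mathcomp Require Import ring lra zify measurable_realfun.
Import Order.TTheory GRing.Theory Num.Theory.
Local Open Scope classical_set_scope.
Local Open Scope ring_scope.

Section Helpers.
Variable R : realType.

Lemma geom_sum_bound (r : R) n : 0 <= r < 1 ->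
  \sum_(k < n) (k.+1)%:R * r ^+ k <= ((1 - r) ^+ 2)^-1.
Proof.
move=> /andP[r0 r1].
have key : forall m, (1 - r) ^+ 2 * \sum_(k < m) (k.+1)%:R * r ^+ k =
   1 - (m.+1)%:R * r ^+ m + m%:R * r ^+ m.+1.
  elim=> [|m IH]; first by rewrite big_ord0 mulr0 expr0 mul1r subrr add0r mul0r.
  rewrite big_ord_recr /= mulrDr IH !exprS -!natr1.
  ring.
have p : 0 < (1 - r) ^+ 2 by rewrite exprn_gt0 // subr_gt0.
rewrite -(ler_pM2l p) mulfV ?gt_eqF // key.
have h1 : n%:R * r ^+ n.+1 <= n%:R * r ^+ n.
  by rewrite ler_wpM2l // exprS ler_piMl ?exprn_ge0 // ltW.
have h2 : n%:R * r ^+ n <= n.+1%:R * r ^+ n.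
  by rewrite ler_wpM2r ?exprn_ge0 // ler_nat.
lra.
Qed.

Lemma nneseries_ub (u : nat -> \bar R) (B : \bar R) :
  (forall n, (0 <= u n)%E) -> (forall k, (\sum_(0 <= i < k) u i <= B)%E) ->
  (\sum_(0 <= i <oo) u i <= B)%E.
Proof.
move=> u0 ub.
have nd := @ereal_nondecreasing_series R u xpredT 0%N (fun n _ _ => u0 n).
rewrite (cvg_lim _ (ereal_nondecreasing_cvgn nd)) //.
by apply: ge_ereal_sup => _ [k _ <-]; exact: ub.
Qed.

Lemma powR_exprn (a q : R) j : 0 <= a -> (a ^+ j) `^ q = (a `^ q) ^+ j.
Proof. by move=> a0; rewrite -powR_mulrn // powRAC powR_mulrn // powR_ge0. Qed.


Lemma half_powR_lt1 (x : R) : 0 < x -> (2^-1) `^ x < 1.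
Proof.
move=> x0; rewrite /powR gt_eqF ?invr_gt0 // expR_lt1.
by rewrite pmulr_rlt0 // ln_lt0 // invr_gt0 /= invf_lt1 //; lra.
Qed.

Lemma rate_lt1 (d : nat) (q : R) : d%:R < q -> 2 ^+ d * (2^-1) `^ q < 1.
Proof.
move=> dq.
have -> : q = d%:R + (q - d%:R) by rewrite addrC subrK.
rewrite powRD; last by apply/implyP => _; rewrite invr_eq0.
rewrite powR_mulrn ?invr_ge0 // mulrA exprVn mulfV ?expf_neq0 // mul1r.
by apply: half_powR_lt1; rewrite subr_gt0.
Qed.

Lemma rate_ge0 (d : nat) (q : R) : 0 <= 2 ^+ d * (2^-1) `^ q.
Proof. by rewrite mulr_ge0 ?exprn_ge0 ?powR_ge0. Qed.


Import HBNNSimple.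

Lemma int_le_ae (D : set R) (f g : R -> \bar R) (N : set R) :
  (forall x, D x -> (0 <= f x)%E) -> measurable_fun setT g -> (forall x, (0 <= g x)%E) ->
  measurable N -> (@lebesgue_measure R) N = 0%E ->
  (forall x, D x -> ~ N x -> (f x <= g x)%E) ->
  (\int[lebesgue_measure]_(x in D) f x <= \int[lebesgue_measure]_x g x)%E.
Proof.
move=> f0 mg g0 mN N0 fg.
rewrite ge0_integralE //.
apply: ge_ereal_sup => _ [h /= hf <-].
have -> : sintegral lebesgue_measure h = (\int[lebesgue_measure]_x (h x)%:E)%E.
  by rewrite integral_nnsfun // patch_setT.
apply: ae_ge0_le_integral => //.
- by move=> x _; rewrite lee_fin fun_ge0.
- by apply/measurable_EFinP; exact: measurable_funPT.
- exists N; split => // x /= hx; have [//|Nx] := pselect (N x).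
  exfalso; apply: hx => _.
  apply: le_trans (hf x) _; rewrite /patch; case: ifPn => [|_]; last exact: g0.
  by rewrite inE => Dx; apply: fg.
Qed.

End Helpers.
Arguments geom_sum_bound {R}. Arguments nneseries_ub {R}. Arguments powR_exprn {R}.
Arguments half_powR_lt1 {R}. Arguments rate_lt1 {R}. Arguments rate_ge0 {R}.
Arguments int_le_ae {R}.

Section Grid.
Variables (R : realType) (d : nat).

Lemma supnorm_lt (x y : pt R d) e : 0 < e -> (forall i, `|x i - y i| < e) -> supnorm x y < e.
Proof. by move=> e0 H; rewrite /supnorm; apply: bigmax_lt. Qed.

Lemma supnorm_le (x y : pt R d) e : 0 <= e -> (forall i, `|x i - y i| <= e) -> supnorm x y <= e.
Proof. by move=> e0 H; rewrite /supnorm; apply: bigmax_le. Qed.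

Lemma supnorm_ge (x y : pt R d) i : `|x i - y i| <= supnorm x y.
Proof. by rewrite /supnorm (bigD1 i) //= le_max lexx. Qed.

Lemma supnorm_ge0 (x y : pt R d) : 0 <= supnorm x y.
Proof. rewrite /supnorm; elim/big_ind: _ => //= a b ha hb; by rewrite le_max ha. Qed.


Definition gsz (h : R) : nat := Num.truncn (2 / h).
Definition cell (h : R) (x : pt R d) : {ffun 'I_d -> 'I_(gsz h).+1} :=
  [ffun i => inord (Num.truncn ((x i + 1) / h))].
Definition gridpt (h : R) (c : {ffun 'I_d -> 'I_(gsz h).+1}) : pt R d :=
  fun i => -1 + (c i)%:R * h.

Lemma cell_val h x i : 0 < h -> Xdom d x ->
  (cell h x i : nat) = Num.truncn ((x i + 1) / h).
Proof.
move=> h0 Xx; rewrite ffunE inordK // ltnS /gsz; apply: le_truncn.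
by rewrite ler_pM2r ?invr_gt0 //; have := Xx i; lra.
Qed.

Lemma cell_close h x y : 0 < h -> Xdom d x -> Xdom d y ->
  cell h x = cell h y -> supnorm x y < h.
Proof.
move=> h0 Xx Xy e; apply: supnorm_lt => // i.
have : (cell h x i : nat) = cell h y i by rewrite e.
rewrite !cell_val // => et.
have ax : 0 <= (x i + 1) / h by rewrite divr_ge0 //; [have := Xx i; lra | exact: ltW].
have ay : 0 <= (y i + 1) / h by rewrite divr_ge0 //; [have := Xy i; lra | exact: ltW].
move: (truncn_itv ax) (truncn_itv ay); rewrite et.
set n := Num.truncn _ => /andP[a1 a2] /andP[b1 b2].
have hx : x i = (x i + 1) / h * h - 1 by rewrite divfK ?gt_eqF //; ring.
have hy : y i = (y i + 1) / h * h - 1 by rewrite divfK ?gt_eqF //; ring.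
rewrite hx hy.
have -> : (x i + 1) / h * h - 1 - ((y i + 1) / h * h - 1) = ((x i + 1) / h - (y i + 1) / h) * h by ring.
rewrite normrM (gtr0_norm h0) gtr_pMl // ltr_norml.
rewrite -natr1 in a2 b2; apply/andP; split; lra.
Qed.

Lemma gridpt_cell h x : 0 < h -> Xdom d x ->
  Xdom d (gridpt h (cell h x)) /\ supnorm x (gridpt h (cell h x)) <= h.
Proof.
move=> h0 Xx.
have H i : -1 <= gridpt h (cell h x) i <= x i /\ x i - gridpt h (cell h x) i <= h.
  rewrite /gridpt cell_val //.
  have ax : 0 <= (x i + 1) / h by rewrite divr_ge0 //; [have := Xx i; lra | exact: ltW].
  move: (truncn_itv ax); set n := Num.truncn _ => /andP[a1 a2].
  rewrite -natr1 in a2.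
  have hx : x i = (x i + 1) / h * h - 1 by rewrite divfK ?gt_eqF //; ring.
  have n0 : 0 <= n%:R * h by rewrite mulr_ge0 // ltW.
  have e1 : n%:R * h <= (x i + 1) / h * h by rewrite ler_pM2r.
  have e2 : (x i + 1) / h * h <= n%:R * h + h.
    have -> : n%:R * h + h = (n%:R + 1) * h by ring.
    by rewrite ler_pM2r // ltW.
  split; first (apply/andP; split); lra.
split.
  move=> i; have [/andP[H1 H2] _] := H i; have /andP[X1 X2] := Xx i.
  apply/andP; split; lra.
apply: supnorm_le; first exact: ltW.
move=> i; have [/andP[H1 H2] H3] := H i.
by rewrite ger0_norm; lra.
Qed.

Lemma card_cells h : #|{ffun 'I_d -> 'I_(gsz h).+1}| = ((gsz h).+1 ^ d)%N.
Proof. by rewrite card_ffun !card_ord. Qed.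

Lemma gsz_bound h : 0 < h -> ((gsz h).+1)%:R <= 2 / h + 1.
Proof.
move=> h0; rewrite -natr1 lerD2r /gsz truncn_le divr_ge0 // ltW //.
Qed.

End Grid.
Arguments supnorm_lt {R d}. Arguments supnorm_le {R d}. Arguments supnorm_ge {R d}.
Arguments supnorm_ge0 {R d}.
Arguments gsz {R}. Arguments cell {R d}. Arguments gridpt {R d}. Arguments cell_val {R d}.
Arguments cell_close {R d}. Arguments gridpt_cell {R d}. Arguments card_cells {R d}.
Arguments gsz_bound {R}.

Section Donl.
Variables (R : realType) (d : nat) (q L : R).
Hypothesis q1 : 1 <= q.
Hypothesis L1 : 1 <= L.
Variable T : SLtree R d.
Hypothesis wl : well_labeled T.
Hypothesis re : realizable L T.
Variable b : nat -> bool.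

Let xs t := xlab T (pref b t).

Lemma size_pref (c : nat -> bool) t : size (pref c t) = t.
Proof. by rewrite /pref size_map size_iota. Qed.

Lemma pref_upd t c k : (k <= t)%N ->
  pref (fun i => if i == t then c else b i) k = pref b k.
Proof.
move=> kt; rewrite /pref; apply/eq_in_map => i; rewrite mem_iota add0n => /andP[_ ik].
by rewrite (ltn_eqF (leq_trans ik kt)).
Qed.

Lemma internal_le D k t : (k <= t)%N -> internal D t -> internal D k.
Proof. by case: D => //= n kt tn; exact: leq_ltn_trans kt tn. Qed.

Lemma xs_dom t : internal (depth T) t -> Xdom d (xs t).
Proof. by move=> it; have := wl (pref b t); rewrite size_pref => /(_ it) []. Qed.

Lemma slab01 t c : internal (depth T) t -> 0 <= slab T (pref b t) c <= 1.
Proof. by move=> it; have := wl (pref b t); rewrite size_pref => /(_ it) [_]. Qed.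

Lemma close_gap t k : internal (depth T) t -> (k < t)%N ->
  `|slab T (pref b t) false - slab T (pref b t) true| <= 2 * L * supnorm (xs t) (xs k).
Proof.
move=> it kt.
have one c : `|slab T (pref b t) c - slab T (pref b k) (b k)| <= L * supnorm (xs t) (xs k).
  pose b' := fun i => if i == t then c else b i.
  have [h [[_ Lh] Hh]] : exists h, HL d L h /\ forall k, (k < t.+1)%N ->
      h (xlab T (pref b' k)) = slab T (pref b' k) (b' k).
    apply: re; move: it; rewrite /internal; by case: (depth T).
  have ht := Hh t (ltnSn t); have hk := Hh k (ltnW (leq_trans kt (ltnSn t))).
  rewrite /b' (pref_upd t c t (leqnn t)) eqxx in ht.
  rewrite /b' (pref_upd t c k (ltnW kt)) (ltn_eqF kt) in hk.
  rewrite -ht -hk; apply: Lh; apply: xs_dom => //.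
  exact: internal_le (ltnW kt) it.
have h0 := one false; have h1 := one true.
set v := slab T (pref b k) (b k) in h0 h1 *.
set a := slab T _ false in h0 *; set c := slab T _ true in h1 *.
have := ler_normD (a - v) (v - c).
rewrite (distrC v c) (_ : a - v + (v - c) = a - c); last by ring.
lra.
Qed.

Lemma gap_le1 t : internal (depth T) t -> gap q T (pref b t) <= 1.
Proof.
move=> it; rewrite /gap /lossq.
have /andP[a0 a1] := slab01 t false it; have /andP[c0 c1] := slab01 t true it.
apply: (@le_trans _ _ (1 `^ q)); last by rewrite powR1.
apply: ge0_ler_powR; rewrite ?nnegrE //.
  exact: le_trans ler01 q1.
by rewrite ler_norml; apply/andP; split; lra.
Qed.


Let th := (2^-1 : R) `^ q.
Let e j := (2^-1 : R) ^+ j / (2 * L).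
Definition far j t : bool := [forall k : 'I_t, e j < supnorm (xs t) (xs k)].

Lemma q0 : 0 <= q. Proof. exact: le_trans ler01 q1. Qed.
Lemma L0 : 0 < L. Proof. exact: lt_le_trans ltr01 L1. Qed.

Lemma th_ge0 : 0 <= th. Proof. exact: powR_ge0. Qed.

Lemma gap_close t k j : internal (depth T) t -> (k < t)%N ->
  supnorm (xs t) (xs k) <= e j -> gap q T (pref b t) <= th ^+ j.
Proof.
move=> it kt se; rewrite /gap /lossq /th -powR_exprn ?invr_ge0 //.
apply: ge0_ler_powR; rewrite ?nnegrE ?exprn_ge0 ?invr_ge0 //; first exact: q0.
apply: le_trans (close_gap _ _ it kt) _.
have -> : (2^-1 : R) ^+ j = 2 * L * e j.
  by rewrite /e mulrC divfK // mulf_neq0 // gt_eqF // L0.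
by rewrite ler_wpM2l // mulr_ge0 // ltW // L0.
Qed.

Lemma gap_levels t J : internal (depth T) t ->
  gap q T (pref b t) <= th ^+ J + \sum_(j < J) (far j.+1 t)%:R * th ^+ j.
Proof.
move=> it; elim: J => [|J IH].
  by rewrite expr0 big_ord0 addr0 (gap_le1 _ it).
rewrite big_ord_recr /=.
have S0 : 0 <= \sum_(j < J) (far j.+1 t)%:R * th ^+ j.
  by apply: sumr_ge0 => j _; rewrite mulr_ge0 ?exprn_ge0 ?th_ge0.
have thJ : 0 <= th ^+ J.+1 by rewrite exprn_ge0 ?th_ge0.
case fJ : (far J.+1 t).
  by rewrite mul1r; move: IH; lra.
move/negbT: fJ; rewrite negb_forall => /existsP[k]; rewrite -leNgt => hk.
have := gap_close _ _ _ it (ltn_ord k) hk.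
rewrite mul0r addr0; lra.
Qed.

Lemma count_far j n :
  (#|[pred t : 'I_n | internal (depth T) t && far j.+1 t]| <= (gsz (e j.+1)).+1 ^ d)%N.
Proof.
rewrite -card_cells.
have ep : 0 < e j.+1 by rewrite /e divr_gt0 ?exprn_gt0 ?invr_gt0 // mulr_gt0 // L0.
apply: (@leq_card_in _ _ (fun t : 'I_n => cell (e j.+1) (xs t))).
move=> t1 t2; rewrite !inE => /andP[i1 f1] /andP[i2 f2] ce.
apply/val_inj; case: (ltngtP t1 t2) => // H; exfalso.
- have := (forallP f2) (Ordinal H) => /=.
  have := cell_close _ _ _ ep (xs_dom _ i2) (xs_dom _ i1) (esym ce).
  by move=> a b'; have := lt_trans a b'; rewrite ltxx.
- have := (forallP f1) (Ordinal H) => /=.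
  have := cell_close _ _ _ ep (xs_dom _ i1) (xs_dom _ i2) ce.
  by move=> a b'; have := lt_trans a b'; rewrite ltxx.
Qed.

Lemma gsz_e j : ((gsz (e j.+1)).+1)%:R <= 16 * L * 2 ^+ j.
Proof.
have ep : 0 < e j.+1 by rewrite /e divr_gt0 ?exprn_gt0 ?invr_gt0 // mulr_gt0 // L0.
apply: le_trans (gsz_bound _ ep) _.
have -> : 2 / e j.+1 = 8 * L * 2 ^+ j.
  rewrite /e exprVn exprS invfM invrK; field.
  by rewrite gt_eqF // L0.
have : 1 <= L * 2 ^+ j.
  have h2 : 1 <= (2:R) ^+ j by rewrite exprn_ege1 // ler1n.
  by have := ler_pM ler01 ler01 L1 h2; rewrite mul1r.
lra.
Qed.

Lemma sum_ind_card (n : nat) (P : pred 'I_n) :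
  \sum_(t < n) ((P t)%:R : R) = (#|P|)%:R.
Proof.
rewrite -sum1_card natr_sum [RHS]big_mkcond /=; apply: eq_bigr => t _.
have -> : (t \in P) = P t by []. by case: (P t).
Qed.

Lemma branch_partial n : d%:R < q ->
  \sum_(t < n) (if internal (depth T) t then gap q T (pref b t) else 0) <=
  (1 + 16 ^+ d * L ^+ d) / (1 - 2 ^+ d * th) ^+ 2.
Proof.
move=> dq.
set r := 2 ^+ d * th.
have r0 : 0 <= r by apply: rate_ge0.
have r1 : r < 1 by apply: rate_lt1.
have thr : th <= r by rewrite /r ler_peMl ?th_ge0 // exprn_ege1 // ler1n.
have step1 : \sum_(t < n) (if internal (depth T) t then gap q T (pref b t) else 0) <=
    \sum_(t < n) (th ^+ n + \sum_(j < n) ((internal (depth T) t && far j.+1 t))%:R * th ^+ j).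
  apply: ler_sum => t _; case: ifP => it.
    by rewrite /=; exact: gap_levels.
  rewrite big1 ?addr0 ?exprn_ge0 ?th_ge0 // => j _.
  by rewrite /= mul0r.
apply: le_trans step1 _.
rewrite big_split /= sumr_const card_ord exchange_big /=.
have step2 : \sum_(j < n) \sum_(t < n) ((internal (depth T) t && far j.+1 t))%:R * th ^+ j
    <= 16 ^+ d * L ^+ d * \sum_(j < n) r ^+ j.
  rewrite mulr_sumr; apply: ler_sum => j _.
  rewrite -mulr_suml (sum_ind_card _ (fun t : 'I_n => internal (depth T) t && far j.+1 t)).
  apply: le_trans (_ : ((gsz (e j.+1)).+1 ^ d)%:R * th ^+ j <= _).
    by rewrite ler_wpM2r ?exprn_ge0 ?th_ge0 // ler_nat count_far.
  rewrite natrX.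
  apply: le_trans (_ : (16 * L * 2 ^+ j) ^+ d * th ^+ j <= _).
    rewrite ler_wpM2r ?exprn_ge0 ?th_ge0 // lerXn2r // ?nnegrE ?gsz_e //.
    by rewrite mulr_ge0 ?exprn_ge0 // mulr_ge0 // ltW // L0.
  rewrite /r !exprMn -exprM mulnC exprM; rewrite le_eqVlt; apply/orP; left; apply/eqP; ring.
have step3 : \sum_(j < n) r ^+ j <= ((1 - r) ^+ 2)^-1.
  apply: le_trans (geom_sum_bound r n _); last by rewrite r0 r1.
  apply: ler_sum => j _; rewrite ler_peMl ?exprn_ge0 // ler1n //.
have step4 : th ^+ n *+ n <= ((1 - r) ^+ 2)^-1.
  apply: le_trans (geom_sum_bound r n.+1 _); last by rewrite r0 r1.
  rewrite big_ord_recr /= -(addr0 (th ^+ n *+ n)) addrC lerD //.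
    rewrite -mulr_natl ler_pM ?exprn_ge0 ?th_ge0 ?ler_nat //.
    by rewrite lerXn2r // nnegrE th_ge0.
  by apply: sumr_ge0 => j _; rewrite mulr_ge0 ?exprn_ge0.
have L0' : 0 <= 16 ^+ d * L ^+ d by rewrite mulr_ge0 ?exprn_ge0 // ltW // L0.
have := ler_wpM2l L0' step3.
rewrite mulrDl mul1r.
lra.
Qed.

End Donl.

Lemma Donl_bound (R : realType) (d : nat) (q L : R) :
  1 <= q -> 1 <= L -> d%:R < q ->
  (Donl d q L <= ((1 + 16 ^+ d * L ^+ d) / (1 - 2 ^+ d * (2^-1) `^ q) ^+ 2)%:E)%E.
Proof.
move=> q1 L1 dq.
apply: ge_ereal_sup => _ [T [wl re] <-].
apply: le_trans (ereal_inf_lbound _) _; first by exists (fun _ => false).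
apply: nneseries_ub.
  by move=> t; case: ifP => // _; rewrite lee_fin powR_ge0.
move=> k.
have -> : (\sum_(0 <= i < k) (if internal (depth T) i then (gap q T (pref (fun _ => false) i))%:E else 0%E))%E
    = (\sum_(i < k) (if internal (depth T) i then gap q T (pref (fun _ => false) i) else 0))%:E.
  rewrite big_mkord (eq_bigr (fun i : 'I_k => (if internal (depth T) i then gap q T (pref (fun _ => false) i) else 0)%:E)); last by move=> i _; case: ifP.
  by rewrite sumEFin.
rewrite lee_fin; exact: branch_partial.
Qed.

Section Cover.
Variables (R : realType) (d : nat) (q L : R).
Hypothesis q1 : 1 <= q.
Hypothesis L1 : 1 <= L.
Variable k : nat.

Let L0 : 0 < L. Proof. exact: lt_le_trans ltr01 L1. Qed.
Let q0 : 0 <= q. Proof. exact: le_trans ler01 q1. Qed.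

Definition dl_ := (2^-1 : R) ^+ k.+1.
Definition hk := dl_ / (4 * L).
Definition mk : nat := (2 ^ k.+2)%N.

Lemma hk_gt0 : 0 < hk.
Proof. by rewrite /hk /dl_ divr_gt0 ?exprn_gt0 ?invr_gt0 // mulr_gt0. Qed.

Definition pat (u : pt R d -> R) : {ffun {ffun 'I_d -> 'I_(gsz hk).+1} -> 'I_mk.+1} :=
  [ffun c => inord (Num.truncn (u (gridpt hk c) * mk%:R))].

Definition rep (p : {ffun {ffun 'I_d -> 'I_(gsz hk).+1} -> 'I_mk.+1}) : pt R d -> R :=
  match pselect (exists v, HL d L v /\ pat v = p) with
  | left H => proj1_sig (cid H)
  | right _ => fun _ => 0
  end.

Lemma HL0 : HL d L (fun _ => 0).
Proof.
split=> [x _|x y _ _]; first by rewrite lexx ler01.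
by rewrite subrr normr0 mulr_ge0 ?supnorm_ge0 // ltW.
Qed.

Lemma rep_HL p : HL d L (rep p).
Proof.
rewrite /rep; case: pselect => [H|_]; last exact: HL0.
by case: (proj2_sig (cid H)).
Qed.

Lemma rep_pat u : HL d L u -> pat (rep (pat u)) = pat u /\ HL d L (rep (pat u)).
Proof.
move=> Hu; rewrite /rep; case: pselect => [H|N]; last by exfalso; apply: N; exists u.
by case: (proj2_sig (cid H)).
Qed.

Lemma trunc_lev (y : R) : 0 <= y <= 1 -> (Num.truncn (y * mk%:R) <= mk)%N.
Proof.
move=> /andP[y0 y1]; rewrite -[X in (_ <= X)%N](@natrK R mk); apply: le_truncn.
by rewrite ler_piMl.
Qed.

Lemma lev_close (y z : R) : 0 <= y <= 1 -> 0 <= z <= 1 ->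
  Num.truncn (y * mk%:R) = Num.truncn (z * mk%:R) -> `|y - z| <= mk%:R^-1.
Proof.
move=> /andP[y0 y1] /andP[z0 z1] e.
have m0 : 0 < (mk%:R : R) by rewrite ltr0n /mk expn_gt0.
have ay : 0 <= y * mk%:R by rewrite mulr_ge0 // ltW.
have az : 0 <= z * mk%:R by rewrite mulr_ge0 // ltW.
move: (truncn_itv ay) (truncn_itv az); rewrite e.
set n := Num.truncn _ => /andP[a1 a2] /andP[b1 b2].
rewrite -natr1 in a2 b2.
have h : `|y * mk%:R - z * mk%:R| <= 1 by rewrite ler_norml; apply/andP; split; lra.
rewrite -mulrBl normrM (gtr0_norm m0) in h.
by rewrite -(ler_pM2r m0) mulVf ?gt_eqF.
Qed.

Lemma cover_ok u x : HL d L u -> Xdom d x -> `|u x - rep (pat u) x| <= dl_.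
Proof.
move=> Hu Xx; have [pe Hv] := rep_pat _ Hu; set v := rep (pat u) in pe Hv *.
have [Xz sz] := gridpt_cell _ _ hk_gt0 Xx; set z := gridpt hk (cell hk x) in Xz sz.
have e1 : `|u x - u z| <= L * hk.
  apply: le_trans (proj2 Hu _ _ Xx Xz) _; apply: ler_wpM2l; first exact: ltW L0.
  exact: sz.
have e2 : `|v z - v x| <= L * hk.
  apply: le_trans (proj2 Hv _ _ Xz Xx) _; apply: ler_wpM2l; first exact: ltW L0.
  have -> : supnorm z x = supnorm x z by rewrite /supnorm; apply: eq_bigr => i _; rewrite distrC.
  exact: sz.
have e3 : `|u z - v z| <= mk%:R^-1.
  move/ffunP: pe => /(_ (cell hk x)); rewrite !ffunE /= => /(congr1 val).
  have uz := proj1 Hu _ Xz; have vz := proj1 Hv _ Xz.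
  rewrite /= !inordK ?ltnS ?trunc_lev // => et.
  by rewrite distrC; apply: lev_close _ _ vz uz et.
have hkL : L * hk = dl_ / 4 by rewrite /hk; field; rewrite gt_eqF.
have mkd : (mk%:R : R)^-1 = dl_ / 2.
  by rewrite /mk /dl_ natrX exprVn !exprS; field; rewrite expf_neq0.
have := ler_normD (u x - u z) (u z - v x).
have := ler_normD (u z - v z) (v z - v x).
have -> : u z - v z + (v z - v x) = u z - v x by ring.
have -> : u x - u z + (u z - v x) = u x - v x by ring.
lra.
Qed.

Definition NC := #|{ffun {ffun 'I_d -> 'I_(gsz hk).+1} -> 'I_mk.+1}|.

Lemma covnum_le eps : ((2^-1 : R) `^ q) ^+ k.+1 <= eps ->
  (covnum q L (HL d L) eps <= (NC%:R)%:E)%E.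
Proof.
move=> he; apply: ereal_inf_lbound; exists NC => //.
exists (fun i => rep (enum_val i)); split; first by move=> i; exact: rep_HL.
move=> u Hu; exists (enum_rank (pat u)); rewrite enum_rankK.
apply: ge_ereal_sup => _ [x Xx <-]; rewrite lee_fin /lossq.
apply: le_trans he; rewrite -powR_exprn ?invr_ge0 //.
apply: ge0_ler_powR => //; rewrite ?nnegrE ?exprn_ge0 ?invr_ge0 //.
exact: cover_ok.
Qed.

Lemma NC_ge1 : (1 <= NC)%N.
Proof. by rewrite /NC card_ffun card_ord expn_gt0. Qed.

Lemma logNC : ln (NC%:R : R) / ln 2 <= (32 * L * 2 ^+ k) ^+ d * (k.+3)%:R.
Proof.
have ln2 : 0 < ln (2 : R) by rewrite ln_gt0 // ltr1n.
rewrite /NC card_ffun card_cells card_ord natrX lnXn ?ltr0n //.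
have hm : ln (mk.+1%:R : R) <= ln 2 *+ k.+3.
  rewrite -lnXn ?ltr0n // ler_ln ?posrE ?ltr0n ?exprn_gt0 //.
  rewrite -natrX ler_nat /mk !expnS; have := expn_gt0 2 k; lia.
set G := ((gsz hk).+1 ^ d)%N.
have h1 : ln (mk.+1%:R : R) *+ G / ln 2 <= (k.+3 * G)%:R.
  rewrite ler_pdivrMr // natrM.
  apply: le_trans (ler_wMn2r G hm) _.
  by rewrite -mulrnA -[X in X <= _]mulr_natl natrM.
apply: le_trans h1 _.
have G1 : ((gsz hk).+1%:R : R) <= 32 * L * 2 ^+ k.
  apply: le_trans (gsz_bound _ hk_gt0) _.
  have -> : 2 / hk = 16 * L * 2 ^+ k.
    rewrite /hk /dl_ exprVn exprS invfM invrK; field; exact: lt0r_neq0.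
  have h2 : 1 <= (2:R) ^+ k by rewrite exprn_ege1 // ler1n.
  have := ler_pM ler01 ler01 L1 h2; rewrite mul1r; lra.
have G' : (G%:R : R) <= (32 * L * 2 ^+ k) ^+ d.
  rewrite /G natrX; apply: lerXn2r; rewrite ?nnegrE ?ler0n //.
  by apply: le_trans G1; rewrite ler0n.
by rewrite natrM mulrC ler_wpM2r.
Qed.

End Cover.

Section PhiB.
Variables (R : realType) (d : nat) (q L : R).
Hypothesis q1 : 1 <= q.
Hypothesis L1 : 1 <= L.

Let L0 : 0 < L. Proof. exact: lt_le_trans ltr01 L1. Qed.

Lemma covnum_ge1 e : (1 <= covnum q L (HL d L) e)%E.
Proof.
apply: le_ereal_inf_tmp => _ [n [g [_ Hg]] <-].
have [i _] := Hg _ (HL0 _ _ _ L1).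
by rewrite lee_fin ler1n; case: n g Hg i => [|n] g Hg [].
Qed.

Lemma covnum_le1 e : 1 <= e -> (covnum q L (HL d L) e <= 1)%E.
Proof.
move=> e1; apply: ereal_inf_lbound; exists 1%N => //.
exists (fun _ => fun _ => 0); split; first by move=> _; exact: HL0.
move=> u Hu; exists ord0.
apply: ge_ereal_sup => _ [x Xx <-]; rewrite lee_fin /lossq subr0.
apply: le_trans e1.
have /andP[u0 u1] := proj1 Hu x Xx.
apply: (@le_trans _ _ (1 `^ q)); last by rewrite powR1.
apply: ge0_ler_powR; rewrite ?nnegrE //; first exact: le_trans ler01 q1.
by rewrite ger0_norm.
Qed.

Lemma log2e_ge0 (c : \bar R) : (1 <= c)%E -> (0 <= log2e c)%E.
Proof.
case: c => [r||] //= r1; rewrite lee_fin divr_ge0 ?ln_ge0 //.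
by rewrite ler1n.
Qed.

Lemma log2e_le (c : \bar R) (N : R) : (1 <= c)%E -> (c <= N%:E)%E ->
  (log2e c <= (ln N / ln 2)%:E)%E.
Proof.
case: c => [r||] //= r1; rewrite ?leey ?leNye //= => rN.
move: r1 rN; rewrite !lee_fin => r1 rN.
rewrite ler_pM2r ?invr_gt0 ?ln_gt0 ?ltr1n // ler_ln ?posrE //.
  by apply: lt_le_trans r1.
by apply: lt_le_trans (le_trans r1 rN).
Qed.

Let th := (2^-1 : R) `^ q.
Definition Bk (k : nat) : R := (32 * L * 2 ^+ k) ^+ d * (k.+3)%:R.

Lemma th_gt0 : 0 < th. Proof. by rewrite powR_gt0 // invr_gt0. Qed.

Lemma th_le_half : th <= 2^-1.
Proof.
rewrite /th -{2}(@powRr1 _ (2^-1)) ?invr_ge0 //.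
apply: ger_powR => //; apply/andP; split; rewrite ?invr_gt0 // invf_le1 //; lra.
Qed.

Lemma Bk_ge0 k : 0 <= Bk k.
Proof. by rewrite /Bk mulr_ge0 ?exprn_ge0 // mulr_ge0 ?exprn_ge0 // mulr_ge0 // ltW. Qed.

Lemma f_le_Bk k e : th ^+ k.+1 <= e -> (log2e (covnum q L (HL d L) e) <= (Bk k)%:E)%E.
Proof.
move=> he; apply: le_trans (log2e_le _ _ (covnum_ge1 e) (@covnum_le R d q L q1 L1 k e he)) _.
by rewrite lee_fin; exact: (@logNC R d q L q1 L1 k).
Qed.

Lemma f_le0 e : 1 <= e -> (log2e (covnum q L (HL d L) e) <= 0)%E.
Proof.
move=> e1; have := log2e_le _ 1 (covnum_ge1 e) (covnum_le1 _ e1).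
by rewrite ln1 mul0r.
Qed.

Lemma exists_level e : 0 < e -> e < 1 -> exists k, th ^+ k.+1 < e <= th ^+ k.
Proof.
move=> e0 e1.
have ex : exists n, th ^+ n.+1 < e.
  exists (Num.truncn (e^-1)).
  set n := Num.truncn _.
  have h1 : th ^+ n.+1 <= (2^-1) ^+ n.+1.
    by rewrite lerXn2r // ?nnegrE ?invr_ge0 ?th_le_half // ltW // th_gt0.
  have h2 : (2^-1 : R) ^+ n.+1 <= (n.+1%:R)^-1.
    rewrite exprVn lef_pV2 ?posrE ?exprn_gt0 ?ltr0n // -natrX ler_nat.
    by apply: ltnW; rewrite ltn_expl.
  have h3 : (n.+1%:R : R)^-1 < e.
    rewrite -[e in _ < e](invrK e) ltf_pV2 ?posrE ?invr_gt0 ?ltr0n //.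
    exact: truncnS_gt.
  by apply: le_lt_trans h3; apply: le_trans h2.
have [k hk hmin] := ex_minnP ex.
exists k; rewrite hk /=.
case: k hk hmin => [|k] hk hmin; first by rewrite expr0 ltW.
by rewrite leNgt; apply/negP => /hmin; rewrite ltnn.
Qed.

Definition Ik (k : nat) : set R := [set` `]th ^+ k.+1, th ^+ k]].
Definition gstep (x : R) : \bar R := (\sum_(k <oo) (Bk k * \1_(Ik k) x)%:E)%E.

Lemma term_ge0 k x : (0 <= (Bk k * \1_(Ik k) x)%:E)%E.
Proof. by rewrite lee_fin mulr_ge0 ?Bk_ge0. Qed.

Lemma gstep_ge0 x : (0 <= gstep x)%E.
Proof. by apply: nneseries_ge0 => n _ _; exact: term_ge0. Qed.

Lemma gstep_ge_term k x : Ik k x -> ((Bk k)%:E <= gstep x)%E.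
Proof.
move=> Ix; apply: le_trans (nneseries_lim_ge k.+1 _) => //=; last first.
  by move=> n _ _; exact: term_ge0.
rewrite big_nat_recr //= indicE mem_set // mulr1; apply: leeDr.
by apply: sume_ge0 => n _; exact: term_ge0.
Qed.

Lemma gstep_meas : measurable_fun [set: R] gstep.
Proof.
have := @ge0_emeasurable_sum _ _ R setT (fun k x => (Bk k * \1_(Ik k) x)%:E) xpredT.
apply.
  by move=> k x _ _; exact: term_ge0.
move=> k _; apply/measurable_EFinP; apply: measurable_funM => //.
by apply: measurable_indic; exact: measurable_itv.
Qed.

Lemma sumB n : d%:R < q ->
  \sum_(i < n) Bk i * th ^+ i <= 3 * 32 ^+ d * L ^+ d / (1 - 2 ^+ d * th) ^+ 2.
Proof.
move=> dq; set r := 2 ^+ d * th.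
have r0 : 0 <= r by apply: rate_ge0.
have r1 : r < 1 by apply: rate_lt1.
have K0 : 0 <= 3 * 32 ^+ d * L ^+ d by rewrite !mulr_ge0 ?exprn_ge0 // ltW.
apply: le_trans (_ : \sum_(i < n) (3 * 32 ^+ d * L ^+ d) * ((i.+1)%:R * r ^+ i) <= _).
  apply: ler_sum => i _.
  have eB : Bk i * th ^+ i = 32 ^+ d * L ^+ d * r ^+ i * i.+3%:R.
    rewrite /Bk /r !exprMn -exprM mulnC exprM; ring.
  have hi : (i.+3%:R : R) <= 3 * i.+1%:R by rewrite -natrM ler_nat; lia.
  have p0 : 0 <= 32 ^+ d * L ^+ d * r ^+ i.
    by rewrite !mulr_ge0 ?exprn_ge0 // ltW.
  have := ler_wpM2l p0 hi.
  move=> H; rewrite eB.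
  apply: le_trans (_ : 32 ^+ d * L ^+ d * r ^+ i * (3 * i.+1%:R) <= _).
    by rewrite ler_wpM2l.
  by rewrite le_eqVlt; apply/orP; left; apply/eqP; ring.
rewrite -mulr_sumr; apply: ler_wpM2l => //; apply: geom_sum_bound.
by rewrite r0 r1.
Qed.

Lemma int_term k :
  (\int[lebesgue_measure]_x (Bk k * \1_(Ik k) x)%:E <= (Bk k * th ^+ k)%:E)%E.
Proof.
have mI : measurable (Ik k) by exact: measurable_itv.
under eq_integral do rewrite EFinM.
rewrite ge0_integralZl_EFin //; try (by move=> x _; rewrite lee_fin);
  try (by apply/measurable_EFinP; exact: measurable_indic); try exact: Bk_ge0.
rewrite integral_indic // setIT.
have Hm : ((@lebesgue_measure R) (Ik k) <= (th ^+ k)%:E)%E.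
  rewrite /Ik lebesgue_measure_itv /=.
  case: ifP => _; last by rewrite lee_fin exprn_ge0 // ltW // th_gt0.
  by rewrite -EFinB lee_fin gerBl exprn_ge0 // ltW // th_gt0.
have B0 : (0 <= (Bk k)%:E)%E by rewrite lee_fin Bk_ge0.
rewrite EFinM; exact: (lee_wpmul2l B0 Hm).
Qed.

Lemma int_gstep : d%:R < q ->
  (\int[lebesgue_measure]_x gstep x <= (3 * 32 ^+ d * L ^+ d / (1 - 2 ^+ d * th) ^+ 2)%:E)%E.
Proof.
move=> dq; rewrite /gstep integral_nneseries //; last 2 first.
- move=> k; apply/measurable_EFinP; apply: measurable_funM => //.
  by apply: measurable_indic; exact: measurable_itv.
- by move=> k x _; exact: term_ge0.
apply: nneseries_ub => [k|n].
  by apply: integral_ge0 => x _; exact: term_ge0.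
apply: le_trans (_ : (\sum_(0 <= i < n) (Bk i * th ^+ i)%:E <= _)%E).
  by apply: lee_sum => i _; exact: int_term.
by rewrite big_mkord sumEFin lee_fin sumB.
Qed.

Lemma Phi_bound : d%:R < q ->
  (Phi d q L (HL d L) <= (3 * 32 ^+ d * L ^+ d / (1 - 2 ^+ d * th) ^+ 2)%:E)%E.
Proof.
move=> dq; rewrite /Phi; apply: le_trans (int_gstep dq).
apply: (int_le_ae _ _ gstep [set 0]) => //.
- by move=> x _; apply: log2e_ge0; exact: covnum_ge1.
- exact: gstep_meas.
- exact: gstep_ge0.
- exact: lebesgue_measure_set1.
move=> x [x0 _] xn0.
have xp : 0 < x by rewrite lt_neqAle x0 andbT eq_sym; apply/eqP.
have [x1|x1] := ltP x 1.
  have [k /andP[a b]] := exists_level _ xp x1.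
  apply: le_trans (f_le_Bk k x (ltW a)) _.
  apply: (gstep_ge_term k x); rewrite /Ik /= in_itv /= a b //.
by apply: le_trans (f_le0 _ x1) _; exact: gstep_ge0.
Qed.

End PhiB.

Theorem theoremA2 (R : realType) (d : nat) (q : R) :
  (1 <= d)%N -> (d%:R < q) ->
  exists C : R,
    forall L : R, 1 <= L ->
      (Phi d q L (HL d L) <= (C * L ^+ d)%:E)%E /\
      (Donl d q L <= (4 * 2 `^ (q - 1) * C * L ^+ d)%:E)%E.
Proof.
move=> d1 dq.
have q1 : 1 <= q by apply: ltW; apply: le_lt_trans dq; rewrite ler1n.
set r := 2 ^+ d * (2^-1 : R) `^ q.
have r0 : 0 <= r by apply: rate_ge0.
have r1 : r < 1 by apply: rate_lt1.
set D := ((1 - r) ^+ 2)^-1.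
have D0 : 0 <= D by rewrite invr_ge0 exprn_ge0 // subr_ge0 ltW.
exists ((3 * 32 ^+ d + 1 + 16 ^+ d) * D) => L L1.
have Ld : 1 <= L ^+ d by rewrite exprn_ege1.
have a0 : 0 <= 32 ^+ d :> R by rewrite exprn_ge0.
have b0 : 0 <= 16 ^+ d :> R by rewrite exprn_ge0.
have hP := @Phi_bound R d q L q1 L1 dq; have hD := @Donl_bound R d q L q1 L1 dq.
rewrite -/r -/D in hP hD.
have Cb : (1 + 16 ^+ d * L ^+ d) * D <= (3 * 32 ^+ d + 1 + 16 ^+ d) * D * L ^+ d.
  rewrite mulrAC ler_wpM2r //.
  have : 0 <= 3 * 32 ^+ d * L ^+ d by rewrite !mulr_ge0 // ltW // (lt_le_trans ltr01 Ld).
  lra.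
have LD : 0 <= L ^+ d * D by rewrite mulr_ge0 // ltW // (lt_le_trans ltr01 Ld).
split.
  apply: le_trans hP _; rewrite lee_fin.
  have h : 0 <= (1 + 16 ^+ d) * (L ^+ d * D) by rewrite mulr_ge0 // addr_ge0.
  have -> : 3 * 32 ^+ d * L ^+ d / (1 - r) ^+ 2 = 3 * 32 ^+ d * (L ^+ d * D) by rewrite /D mulrA.
  have -> : (3 * 32 ^+ d + 1 + 16 ^+ d) * D * L ^+ d = (3 * 32 ^+ d + 1 + 16 ^+ d) * (L ^+ d * D).
    by rewrite -mulrA (mulrC D).
  move: h; set X := L ^+ d * D; move=> h.
  rewrite -subr_ge0 -mulrBl; apply: mulr_ge0 => //; lra.
apply: le_trans hD _; rewrite lee_fin.
apply: le_trans Cb _.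
have p1 : 1 <= 2 `^ (q - 1) :> R.
  apply: (@le_trans _ _ (2 `^ 0)); first by rewrite powRr0.
  by apply: ler_powR; rewrite ?ler1n // subr_ge0.
set K := _ * D * L ^+ d.
have K0 : 0 <= K by rewrite /K !mulr_ge0 // ?ltW // (lt_le_trans ltr01 Ld).
have -> : 4 * 2 `^ (q - 1) * ((3 * 32 ^+ d + 1 + 16 ^+ d) * D) * L ^+ d = (4 * 2 `^ (q - 1)) * K.
  by rewrite /K; ring.
rewrite ler_peMl //; lra.
Qed.
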